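(* Let $x_1,\dots,x_N$ be contexts and $\xi_1,\dots,\xi_N$ noises. For each $i$, let $\mathcal Y(x_i)\subset\mathbb R^{d(x_i)}$ be finite with no element a strict convex combination of others, $Y(x_i)$ the matrix with columns $y\in\mathcal Y(x_i)$, $\gamma_i=(c(x_i,y,\xi_i))_{y\in\mathcal Y(x_i)}$ for a cost $c$, and $\Omega_{\Delta^{\mathcal Y(x_i)}}$ a proper l.s.c. convex function with domain $\Delta^{\mathcal Y(x_i)}$ whose restriction to the affine hull of $\Delta^{\mathcal Y(x_i)}$ is Legendre-type. Let $\varphi_w$, $w\in\mathcal W$, be a statistical model with $\varphi_w(x_i)\in\mathbb R^{d(x_i)}$, and $\kappa>0$. Define $S(s,q;x_i,\xi_i)=\langle\gamma_i|q\rangle+\kappa\mathcal L_{\Omega_{\Delta^{\mathcal Y(x_i)}}}(s;q)$ and $\mathcal S_N(s_\otimes,q_\otimes)=\frac1N\sum_iS(s_i,q_i;x_i,\xi_i)$. Consider the scheme started from $\bar w^{(0)}$: $$q_\otimes^{(t+1)}=\operatorname*{argmin}_{q_\otimes\in\prod_i\Delta^{\mathcal Y(x_i)}}\mathcal S_N\big((Y(x_i)^\top\varphi_{\bar w^{(t)}}(x_i))_i,q_\otimes\big),\qquad \bar w^{(t+1)}\in\operatorname*{argmin}_{w\in\mathcal W}\mathcal S_N\big((Y(x_i)^\top\varphi_w(x_i))_i,q_\otimes^{(t+1)}\big).$$ Then these updates can be recast as: for each $i$, $$q_i^{(t+1)}=\operatorname*{argmin}_{q_i\in\Delta^{\mathcal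 Y(x_i)}}S\big(Y(x_i)^\top\varphi_{\bar w^{(t)}}(x_i),q_i;x_i,\xi_i\big)=\nabla\Omega^*_{\Delta^{\mathcal Y(x_i)}}\Big(Y(x_i)^\top\varphi_{\bar w^{(t)}}(x_i)-\tfrac1\kappa\gamma_i\Big),$$ so that $\mu_i^{(t+1)}:=Y(x_i)q_i^{(t+1)}$ is the expectation of $\mathbf y$ under the distribution $\nabla\Omega^*_{\Delta^{\mathcal Y(x_i)}}\big(Y(x_i)^\top\varphi_{\bar w^{(t)}}(x_i)-\frac1\kappa\gamma_i\big)$, and $$\bar w^{(t+1)}\in\operatorname*{argmin}_{w\in\mathcal W}\frac1N\sum_{i=1}^N\mathcal L_{\Omega_{\mathcal C(x_i)}}\big(\varphi_w(x_i);Y(x_i)q_i^{(t+1)}\big),$$ where $\Omega_{\mathcal C(x)}(\mu):=\min\{\Omega_{\Delta^{\mathcal Y(x)}}(q):q\in\Delta^{\mathcal Y(x)},\ Y(x)q=\mu\}$ on $\mathcal C(x)=\operatorname{conv}(\mathcal Y(x))$.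
   Context: $\Delta^{\mathcal Y}=\{q\in\mathbb R^{\mathcal Y}:q\ge0,\sum_yq_y=1\}$. Legendre-type: strictly convex on the interior of its domain and essentially smooth (with respect to the affine hull's metric for restrictions). For a convex function $\Omega$, $\Omega^*$ denotes its Fenchel conjugate and $\mathcal L_\Omega(\theta;\mu)=\Omega(\mu)+\Omega^*(\theta)-\langle\theta|\mu\rangle$ its Fenchel–Young loss; $\Omega_{\mathcal C(x)}$ is $+\infty$ outside $\mathcal C(x)$. *)

(* Defs.v *)
From HB Require Import structures.
From mathcomp Require Import all_boot all_order all_algebra.
From mathcomp Require Import all_classical all_reals all_analysis.
Set Implicit Arguments. Unset Strict Implicit. Unset Printing Implicit Defensive.
Import Order.TTheory GRing.Theory Num.Theory.
Import numFieldNormedType.Exports.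
Local Open Scope classical_set_scope.
Local Open Scope ring_scope.

Section Defs.
Variable R : realType.

Definition dotv n (u v : 'cV[R]_n) : R := \sum_(j < n) u j 0 * v j 0.

(* probability simplex Delta^Y, Y indexed by 'I_n *)
Definition simplex n : set 'cV[R]_n :=
  [set q | (forall j, 0 <= q j 0) /\ \sum_(j < n) q j 0 = 1].

Definition ri_simplex n : set 'cV[R]_n :=
  [set q | (forall j, 0 < q j 0) /\ \sum_(j < n) q j 0 = 1].

Definition tangent n : set 'cV[R]_n := [set h | \sum_(j < n) h j 0 = 0].

(* The columns of Y form a finite set (distinct columns) none of whose
   elements is a (strict) convex combination of the others. *)
Definition no_convex_comb d n (Y : 'M[R]_(d, n)) : Prop :=
  injective (fun j : 'I_n => col j Y) /\
  forall j : 'I_n, ~ exists lam : 'cV[R]_n,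
      simplex lam /\ lam j 0 = 0 /\ Y *m lam = col j Y.

Local Open Scope ereal_scope.

Definition proper_fun n (F : 'cV[R]_n -> \bar R) : Prop :=
  (forall q, F q != -oo) /\ exists q, F q < +oo.

Definition convex_fun n (F : 'cV[R]_n -> \bar R) : Prop :=
  forall (u v : 'cV[R]_n) (t : R), (0 < t < 1)%R ->
    F (t *: u + (1 - t) *: v)%R <= t%:E * F u + (1 - t)%:E * F v.

Definition dom_is_simplex n (F : 'cV[R]_n -> \bar R) : Prop :=
  forall q, F q < +oo <-> simplex q.

(* g is the gradient at q of the restriction of F to the affine hull
   {sum = 1} of the simplex (so g lies in the direction space). *)
Definition rel_gradient n (F : 'cV[R]_n -> \bar R) (q g : 'cV[R]_n) : Prop :=
  tangent g /\
  forall e : R, (0 < e)%R -> exists2 delta : R, (0 < delta)%R &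
    forall h : 'cV[R]_n, tangent h -> (`|h| < delta)%R ->
      (`| fine (F (q + h)%R) - fine (F q) - dotv g h | <= e * `|h|)%R.

(* The restriction of F to the affine hull of the simplex is of Legendre
   type: strictly convex on the relative interior of its domain and
   essentially smooth (relative to the affine hull). *)
Definition legendre_on_aff_simplex n (F : 'cV[R]_n -> \bar R) : Prop :=
  (forall (u v : 'cV[R]_n) (t : R), ri_simplex u -> ri_simplex v -> u != v ->
     (0 < t < 1)%R ->
     F (t *: u + (1 - t) *: v)%R < t%:E * F u + (1 - t)%:E * F v) /\
  (exists q : 'cV[R]_n, ri_simplex q) /\
  (forall q, ri_simplex q -> exists g, rel_gradient F q g) /\
  (forall (u : nat -> 'cV[R]_n) (g : nat -> 'cV[R]_n) (p : 'cV[R]_n),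
     (forall k, ri_simplex (u k)) -> (forall k, rel_gradient F (u k) (g k)) ->
     u @ \oo --> p -> ~ ri_simplex p ->
     ((fun k => `|g k|%:E) @ \oo --> +oo)).

Definition fconj n (F : 'cV[R]_n -> \bar R) (theta : 'cV[R]_n) : \bar R :=
  ereal_sup [set (dotv theta q)%:E - F q | q in [set: 'cV[R]_n]].

Definition FYloss n (F : 'cV[R]_n -> \bar R) (theta mu : 'cV[R]_n) : \bar R :=
  F mu + fconj F theta - (dotv theta mu)%:E.

(* Omega_{C}(mu) = min { Omega(q) : q in Delta, Y q = mu }, +oo outside C *)
Definition OmegaC d n (Y : 'M[R]_(d, n)) (F : 'cV[R]_n -> \bar R)
    (mu : 'cV[R]_d) : \bar R :=
  ereal_inf [set F q | q in [set q | simplex q /\ Y *m q = mu]].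

Definition Sloss n (gamma : 'cV[R]_n) (kappa : R) (F : 'cV[R]_n -> \bar R)
    (s q : 'cV[R]_n) : \bar R :=
  (dotv gamma q)%:E + kappa%:E * FYloss F s q.

Definition is_argmin (T : Type) (D : set T) (f : T -> \bar R) (x : T) : Prop :=
  D x /\ forall y, D y -> f x <= f y.

Local Close Scope ereal_scope.

Definition is_gradient n (f : 'cV[R]_n -> R) (v g : 'cV[R]_n) : Prop :=
  differentiable f v /\ forall h, 'd f v h = dotv g h.

End Defs.

(* Main.v *)
Require Import Defs.
From HB Require Import structures.
From mathcomp Require Import all_boot all_order all_algebra.
From mathcomp Require Import all_classical all_reals all_analysis.
From mathcomp Require Import ring lra.
Import Order.TTheory GRing.Theory Num.Theory.
Import numFieldNormedType.Exports.
Local Open Scope classical_set_scope.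
Local Open Scope ring_scope.

Set Implicit Arguments. Unset Strict Implicit. Unset Printing Implicit Defensive.

Section L1.
Variable R : realType.
Variable n : nat.
Implicit Types u v g h q : 'cV[R]_n.

Lemma dotvC u v : dotv u v = dotv v u.
Proof. by apply: eq_bigr => j _; rewrite mulrC. Qed.
Lemma dotvDr u v w : dotv u (v + w) = dotv u v + dotv u w.
Proof. by rewrite /dotv -big_split; apply: eq_bigr => j _; rewrite mxE mulrDr. Qed.
Lemma dotvDl u v w : dotv (v + w) u = dotv v u + dotv w u.
Proof. by rewrite dotvC dotvDr !(dotvC u). Qed.
Lemma dotvZr a u v : dotv u (a *: v) = a * dotv u v.
Proof. by rewrite /dotv mulr_sumr; apply: eq_bigr => j _; rewrite mxE mulrCA. Qed.
Lemma dotvZl a u v : dotv (a *: u) v = a * dotv u v.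
Proof. by rewrite dotvC dotvZr dotvC. Qed.
Lemma dotvNr u v : dotv u (- v) = - dotv u v.
Proof. by rewrite -scaleN1r dotvZr mulN1r. Qed.
Lemma dotvNl u v : dotv (- u) v = - dotv u v.
Proof. by rewrite dotvC dotvNr dotvC. Qed.
Lemma dotvBr u v w : dotv u (v - w) = dotv u v - dotv u w.
Proof. by rewrite dotvDr dotvNr. Qed.
Lemma dotvBl u v w : dotv (v - w) u = dotv v u - dotv w u.
Proof. by rewrite dotvDl dotvNl. Qed.
Lemma dotv0r u : dotv u 0 = 0.
Proof. by rewrite /dotv big1 // => j _; rewrite mxE mulr0. Qed.
Lemma dotv0l u : dotv 0 u = 0.
Proof. by rewrite dotvC dotv0r. Qed.

Lemma normc_coord h j : `|h j 0| <= `|h|.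
Proof.
have -> : `|h| = mx_norm h by [].
rewrite mx_normrE.
by apply/bigmax_geP; right; exists (j, 0).
Qed.

Lemma normc_le h c : 0 <= c -> (forall j, `|h j 0| <= c) -> `|h| <= c.
Proof.
move=> c0 hc; have -> : `|h| = mx_norm h by [].
rewrite mx_normrE.
apply/bigmax_leP; split => // -[j k] _ /=.
by rewrite (ord1 k); apply: hc.
Qed.

Lemma dotv_le g h : `|dotv g h| <= (\sum_j `|g j 0|) * `|h|.
Proof.
rewrite /dotv mulr_suml; apply: le_trans (ler_norm_sum _ _ _) _.
apply: ler_sum => j _; rewrite normrM; apply: ler_wpM2l => //.
exact: normc_coord.
Qed.

Lemma simplex_le1 q j : simplex q -> q j 0 <= 1.
Proof.
move=> [q0 <-]; rewrite (bigD1 j) //= lerDl.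
by apply: sumr_ge0 => k _; apply: q0.
Qed.

Lemma simplex_norm q : simplex q -> `|q| <= 1.
Proof.
move=> sq; apply: normc_le => // j.
by rewrite ger0_norm; [exact: simplex_le1|case: sq].
Qed.

Lemma ri_simplexW q : ri_simplex q -> simplex q.
Proof. by move=> [q0 q1]; split => // j; apply: ltW. Qed.

Lemma simplex_conv u v t : simplex u -> simplex v -> 0 <= t <= 1 ->
  simplex (t *: u + (1 - t) *: v).
Proof.
move=> [u0 u1] [v0 v1] /andP[t0 t1]; split.
  move=> j; rewrite !mxE; apply: addr_ge0; apply: mulr_ge0 => //.
  by rewrite subr_ge0.
under eq_bigr do rewrite !mxE.
by rewrite big_split /= -!mulr_sumr u1 v1 !mulr1 addrC subrK.
Qed.

Lemma tangentB u v : simplex u -> simplex v -> tangent (u - v).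
Proof.
move=> [_ u1] [_ v1]; rewrite /tangent /=.
under eq_bigr do rewrite !mxE.
by rewrite sumrB u1 v1 subrr.
Qed.

Lemma tangentZ a h : tangent h -> tangent (a *: h).
Proof.
rewrite /tangent /= => h0; under eq_bigr do rewrite !mxE.
by rewrite -mulr_sumr h0 mulr0.
Qed.

Lemma conv_eq u z s : u + s *: (z - u) = s *: z + (1 - s) *: u.
Proof. by apply/matrixP => i j; rewrite !mxE; ring. Qed.

Lemma dotv_simplex_le h q : simplex q -> `|dotv h q| <= `|h|.
Proof.
move=> [q0 q1]; rewrite /dotv; apply: le_trans (ler_norm_sum _ _ _) _.
rewrite -[leRHS]mulr1 -q1 mulr_sumr; apply: ler_sum => j _.
rewrite normrM (ger0_norm (q0 j)); apply: ler_wpM2r => //.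
exact: normc_coord.
Qed.

Lemma sum_abs_le h : \sum_j `|h j 0| <= n%:R * `|h|.
Proof.
apply: le_trans (ler_sum _ (fun j _ => normc_coord h j)) _.
by rewrite sumr_const card_ord mulr_natl.
Qed.

Definition ev (j : 'I_n) : 'cV[R]_n := delta_mx j 0.

Lemma ev_simplex j : simplex (ev j).
Proof.
split => [k|]; first by rewrite mxE; case: eqP => //= _; case: eqP.
rewrite (bigD1 j) //= big1 ?mxE ?eqxx ?addr0 // => k kj.
by rewrite mxE (negbTE kj).
Qed.

Lemma dotv_ev g j : dotv g (ev j) = g j 0.
Proof.
rewrite /dotv (bigD1 j) //= big1 ?mxE ?eqxx ?addr0 ?mulr1 // => k kj.
by rewrite mxE (negbTE kj) mulr0.
Qed.

Lemma dotv_sum1 g q : simplex q -> dotv g q - dotv (const_mx (dotv g q)) q = 0.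
Proof.
move=> [_ q1]; rewrite /dotv.
under [X in _ - X]eq_bigr do rewrite mxE.
by rewrite -mulr_sumr q1 mulr1 subrr.
Qed.

Lemma ri_n_gt0 q : ri_simplex q -> (0 < n)%N.
Proof.
case: n q => [|m] // q [_]; by rewrite big_ord0 => /eqP; rewrite eq_sym oner_eq0.
Qed.

Lemma dotv_shift g q (s : R) : simplex q ->
  \sum_j q j 0 * (g j 0 - s) = dotv g q - s.
Proof.
move=> [_ q1]; under eq_bigr do rewrite mulrBr.
rewrite sumrB -mulr_suml q1 mul1r /dotv.
by congr (_ - _); apply: eq_bigr => j _; rewrite mulrC.
Qed.

Lemma bound_aux q0 g (s C1 K0 : R) : ri_simplex q0 -> tangent g -> 0 <= C1 ->
  (forall j, g j 0 - s <= C1) -> - K0 <= dotv g q0 - s ->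
  `|g| <= 2 * \sum_k (C1 + (K0 + C1) / q0 k 0).
Proof.
move=> rq0 tg C10 ha hs; have [q0p q01] := rq0.
have sq0 := ri_simplexW rq0.
rewrite -(dotv_shift g s sq0) in hs.
set D := \sum_k (C1 + (K0 + C1) / q0 k 0).
have KC : 0 <= K0 + C1.
  suff : \sum_j q0 j 0 * (g j 0 - s) <= C1 by lra.
  rewrite -[leRHS]mul1r -q01 mulr_suml; apply: ler_sum => j _.
  by apply: ler_wpM2l; [apply: ltW|].
have aj j : `|g j 0 - s| <= C1 + (K0 + C1) / q0 j 0.
  rewrite ler_norml; apply/andP; split; last first.
    by apply: le_trans (ha j) _; rewrite lerDl divr_ge0 // ltW.
  have h1 : \sum_(k | k != j) q0 k 0 * (g k 0 - s) <= C1.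
    apply: le_trans (_ : \sum_k q0 k 0 * C1 <= C1).
      rewrite [X in _ <= X](bigD1 j) //= -[leLHS]add0r lerD //.
        by rewrite mulr_ge0 // ltW.
      by apply: ler_sum => k _; apply: ler_wpM2l; [apply: ltW|].
    by rewrite -mulr_suml q01 mul1r.
  move: hs; rewrite (bigD1 j) //= => hs.
  have h2 : - (K0 + C1) <= q0 j 0 * (g j 0 - s) by lra.
  have qj := q0p j.
  rewrite -ler_pdivrMl // in h2.
  apply: le_trans (_ : - ((K0 + C1) / q0 j 0) <= _).
    by rewrite lerN2 lerDr.
  by move: h2; rewrite mulrN mulrC.
have D0 j : C1 + (K0 + C1) / q0 j 0 <= D.
  rewrite /D (bigD1 j) //= lerDl; apply: sumr_ge0 => k _.
  by apply: addr_ge0 => //; apply: divr_ge0 => //; apply: ltW.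
have sD : `|s| <= D.
  have n0 := ri_n_gt0 rq0.
  have : \sum_j (g j 0 - s) = - (s *+ n).
    by rewrite sumrB tg sumr_const card_ord sub0r.
  move=> hsum.
  have : `|s| *+ n <= D *+ n.
    rewrite -normrMn -normrN -hsum; apply: le_trans (ler_norm_sum _ _ _) _.
    rewrite -[n in D *+ n]card_ord -sumr_const; apply: ler_sum => j _.
    exact: le_trans (aj j) (D0 j).
  by rewrite lerMn2r; case/orP => // /eqP n00; move: n0; rewrite n00.
apply: normc_le => [|j]; first by have := le_trans (normr_ge0 s) sD; lra.
have hj := le_trans (aj j) (D0 j).
have : `|g j 0| <= `|g j 0 - s| + `|s|.
  by rewrite -{1}(subrK s (g j 0)) ler_normD.
lra.
Qed.

Lemma dotv_adj d (Y : 'M[R]_(d, n)) (phi : 'cV[R]_d) q :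
  dotv (Y^T *m phi) q = dotv phi (Y *m q).
Proof.
rewrite /dotv.
under eq_bigr do rewrite mxE big_distrl /=.
rewrite exchange_big; apply: eq_bigr => i _ /=.
rewrite mxE big_distrr; apply: eq_bigr => j _ /=.
by rewrite !mxE mulrCA mulrA.
Qed.

Lemma mul_col_sum d (Y : 'M[R]_(d, n)) q :
  Y *m q = \sum_(j < n) q j 0 *: col j Y.
Proof.
apply/matrixP => i k; rewrite !mxE summxE; apply: eq_bigr => j _.
by rewrite !mxE (ord1 k) mulrC.
Qed.

End L1.

Section L2.
Variable R : realType.

Lemma norm_trmx_le m p (A : 'M[R]_(m, p)) : `|A^T| <= `|A|.
Proof.
have -> : `|A^T| = mx_norm A^T by [].
have -> : `|A| = mx_norm A by [].
rewrite !mx_normrE; apply/bigmax_leP; split.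
  by apply/bigmax_geP; left.
move=> [i j] _ /=; rewrite mxE.
by apply/bigmax_geP; right; exists (j, i).
Qed.

Lemma trmx_continuous m p : continuous (@trmx R m p).
Proof.
move=> A; apply/(@cvgrPdist_lt _ _ _ _ (nbhs_filter A)) => e e0.
apply/(@nbhs_normP _ ('M[R]_(m, p) : normedModType R)); exists e => //= B /=.
by rewrite -linearB /=; apply: le_lt_trans; apply: norm_trmx_le.
Qed.

Lemma cV_compact n (A : set 'cV[R]_n) (M : R) :
  closed A -> (forall q, A q -> `|q| <= M) -> compact A.
Proof.
move=> cA bA.
pose B := [set r : 'rV[R]_n | A r^T].
have -> : A = (@trmx R 1 n) @` B.
  apply/seteqP; split => [q Aq|_ [r Br <-]] //.
  by exists q^T; rewrite /B /= ?trmxK.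
apply: continuous_compact.
  by apply: continuous_subspaceT; apply: trmx_continuous.
apply: bounded_closed_compact.
  exists M; split; first by rewrite num_real.
  move=> M' MM' r Br; apply: le_trans (ltW MM').
  apply: le_trans (bA _ Br); rewrite -[X in `|X|](trmxK r).
  exact: norm_trmx_le.
have -> : B = (@trmx R 1 n) @^-1` A by [].
apply: preimage_closed => //; move=> x _; exact: trmx_continuous.
Qed.

Variable n : nat.
Implicit Types u v g h q : 'cV[R]_n.

Lemma coordc_continuous j : continuous (fun q : 'cV[R]_n => q j 0).
Proof. exact: coord_continuous. Qed.

Lemma dotv_continuous v : continuous (fun q : 'cV[R]_n => dotv v q).
Proof.
move=> x; apply/(@cvgrPdist_lt _ _ _ _ (nbhs_filter x)) => e e0.
pose C := \sum_j `|v j 0| + 1.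
have C0 : 0 < C by rewrite ltr_pwDr // sumr_ge0.
apply/(@nbhs_normP _ ('cV[R]_n : normedModType R)); exists (e / C) => /=; first by rewrite divr_gt0.
move=> y /= hy; rewrite -dotvBr; apply: le_lt_trans (dotv_le _ _) _.
rewrite ltr_pdivlMr // in hy; apply: le_lt_trans hy.
rewrite mulrC; apply: ler_wpM2l => //; rewrite lerDl //.
Qed.

Lemma simplex_closed : closed (@simplex R n).
Proof.
have -> : @simplex R n = (\bigcap_(j in setT) [set q | 0 <= q j 0]) `&`
   [set q | \sum_j q j 0 = 1].
  apply/seteqP; split => [q [q0 q1]|q [q0 q1]]; split => //.
    by move=> j _; apply: q0.
  by move=> j; apply: (q0 j).
apply: closedI.
  apply: closed_bigI => j _.
  apply: (@preimage_closed _ R (fun q : 'cV[R]_n => q j 0) [set x : R | 0 <= x] _ (@closed_ge R 0)).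
  by move=> x _; apply: coordc_continuous.
apply: (@preimage_closed _ _ (fun q : 'cV[R]_n => \sum_j q j 0) [set x : R | x = 1] _ (@closed_eq R 1)).
move=> x _.
have -> : (fun q : 'cV[R]_n => \sum_j q j 0) = (fun q => dotv (const_mx 1) q).
  by apply: funext => q; apply: eq_bigr => j _; rewrite mxE mul1r.
exact: dotv_continuous.
Qed.

Lemma simplex_compact : compact (@simplex R n).
Proof.
apply: (@cV_compact _ _ 1); first exact: simplex_closed.
exact: simplex_norm.
Qed.

End L2.

Section L4.
Variable R : realType.
Variable n : nat.

Lemma grad_of (f : 'cV[R]_n -> R) v g :
  (forall e, 0 < e -> exists2 d, 0 < d & forall h, `|h| < d ->
     `|f (v + h) - f v - dotv g h| <= e * `|h|) -> is_gradient f v g.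
Proof.
move=> hb.
have glin : linear (dotv g : 'cV[R]_n -> R).
  by move=> a x y; rewrite dotvDr dotvZr.
pose glM := GRing.isLinear.Build _ _ _ _ _ glin.
pose gL : {linear 'cV[R]_n -> R} := HB.pack (dotv g : 'cV[R]_n -> R) glM.
have gc : continuous gL by exact: dotv_continuous.
have hlo : f \o shift v = cst (f v) + gL +o_ (0 : 'cV[R]_n) id.
  apply/eqaddoP => e e0.
  have [d d0 hd] := hb e e0.
  apply/(@nbhs_normP _ ('cV[R]_n : normedModType R)); exists d => //= h /=.
  rewrite sub0r normrN => hh.
  rewrite [X in `|X|](_ : _ = f (v + h) - f v - dotv g h); first exact: hd.
  by rewrite !fctE /= opprD addrA (addrC h).
have dE : 'd f v = gL :> ('cV[R]_n -> R) := diff_unique gc hlo.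
split; last by move=> h; rewrite dE.
apply/diff_locallyP; rewrite dE; split => //.
Qed.
End L4.

Local Open Scope ereal_scope.
Section L3.
Variable R : realType.
Variable n : nat.
Implicit Types u v g h q : 'cV[R]_n.
Variable F : 'cV[R]_n -> \bar R.
Hypothesis Fprop : proper_fun F.
Hypothesis Flsc : lower_semicontinuous F.
Hypothesis Fconv : convex_fun F.
Hypothesis Fdom : dom_is_simplex F.
Hypothesis Fleg : legendre_on_aff_simplex F.

Lemma efin3 (a b : \bar R) (c : R) : a \is a fin_num -> b \is a fin_num ->
  a + b - c%:E = (fine a + fine b - c)%:E.
Proof. by case: a => [a||] //; case: b => [b||]. Qed.

Definition H v q : \bar R := (dotv v q)%:E - F q.

Lemma F_fin q : simplex q -> F q \is a fin_num.
Proof.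
move=> sq; rewrite fin_numE (proj1 Fprop q) /=.
by rewrite lt_eqF //; apply/Fdom.
Qed.

Lemma F_oo q : ~ simplex q -> F q = +oo.
Proof.
move=> nsq; apply/eqP; rewrite eq_le leey /= leNgt; apply/negP => /Fdom.
exact: nsq.
Qed.

Lemma H_oo v q : ~ simplex q -> H v q = -oo.
Proof. by move=> /F_oo; rewrite /H => ->. Qed.

Lemma H_fin v q : simplex q -> H v q = ((dotv v q - fine (F q) : R))%:E.
Proof. by move=> /F_fin; rewrite /H; case: (F q) => [r||]. Qed.

Lemma H_lt v y (b c a : R) : b%:E < F y -> (dotv v y < c)%R -> (c - b <= a)%R ->
  H v y < a%:E.
Proof.
rewrite /H; case Fy: (F y) => [r||] //=.
  rewrite lte_fin -EFinB lte_fin => br vc cba; lra.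
by move=> _ _ _; rewrite addeNy ltNye.
Qed.

Lemma dotv_lt_near v x (c : R) : (dotv v x < c)%R ->
  \forall y \near x, (dotv v y < c)%R.
Proof.
move=> vxc; have e0 : (0 < c - dotv v x)%R by rewrite subr_gt0.
have /cvgrPdist_lt/(_ _ e0) := @dotv_continuous R n v x.
apply: filterS => y /ltr_distlCDr; rewrite addrC subrK //.
Qed.

Lemma lsc_near x (b : R) : b%:E < F x -> \forall y \near x, b%:E < F y.
Proof. by move=> /Flsc[V nV HV]; apply: filterS nV. Qed.

Lemma H_usc v x (a : R) : H v x < a%:E -> \forall y \near x, H v y < a%:E.
Proof.
rewrite /H; case Fx: (F x) => [r||] /=.
- rewrite -EFinB lte_fin => ha.
  pose e := ((a - (dotv v x - r)) / 2)%R.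
  have e0 : (0 < e)%R by rewrite /e divr_gt0 // subr_gt0.
  have h1 : \forall y \near x, (r - e)%:E < F y.
    by apply: lsc_near; rewrite Fx lte_fin; lra.
  have h2 := @dotv_lt_near v x (dotv v x + e) (ltr_pwDr e0 (lexx _) : _).
  apply: filterS2 h1 h2 => y h1y h2y; apply: (H_lt h1y h2y).
  rewrite /e; lra.
- move=> _.
  have h1 : \forall y \near x, (dotv v x + 1 - a)%:E < F y.
    by apply: lsc_near; rewrite Fx ltry.
  have h2 := @dotv_lt_near v x (dotv v x + 1) (ltr_pwDr ltr01 (lexx _) : _).
  apply: filterS2 h1 h2 => y h1y h2y; apply: (H_lt h1y h2y); lra.
- by have := proj1 Fprop x; rewrite Fx.
Qed.

Lemma cover_near (K : set 'cV[R]_n) v (G : set_system R) {PG : Filter G} :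
  compact K ->
  (forall x, K x -> exists a : R, H v x < a%:E /\ \forall B \near G, (a < B)%R) ->
  \forall B \near G, forall y, K y -> H v y < B%:E.
Proof.
move=> /compact_near_coveringP cK hK.
have := cK R G (fun B y => H v y < B%:E) PG.
move=> /(_ _) h; apply: filterS (h _) => [B HB y Ky|]; first exact: HB.
move=> x Kx; case: (hK x Kx) => a [ha hG].
exists ([set y | H v y < a%:E], [set B | (a < B)%R]) => /=.
  by split => //; exact: H_usc ha.
by move=> [y B] /= [hy hB]; apply: lt_trans hy _; rewrite lte_fin.
Qed.

Lemma H_bnd v K : compact K -> K `<=` @simplex R n ->
  exists B : R, forall y, K y -> H v y < B%:E.
Proof.
move=> cK KS.
have : \forall B \near +oo%R, forall y, K y -> H v y < B%:E.
  apply: cover_near => // x Kx.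
  exists (dotv v x - fine (F x) + 1)%R; split.
    by rewrite H_fin; [rewrite lte_fin; lra|exact: KS].
  by apply: nbhs_pinfty_gt; rewrite num_real.
by move=> /filter_ex[B HB]; exists B.
Qed.

Lemma H_gap v K (m : R) : compact K -> K `<=` @simplex R n ->
  (forall x, K x -> H v x < m%:E) ->
  exists2 B : R, (B < m)%R & forall y, K y -> H v y < B%:E.
Proof.
move=> cK KS hK.
have : \forall B \near m^'-, forall y, K y -> H v y < B%:E.
  apply: cover_near => // x Kx.
  have := hK x Kx; rewrite H_fin; last exact: KS.
  rewrite lte_fin => hx.
  exists ((dotv v x - fine (F x) + m) / 2)%R; split.
    by rewrite lte_fin; lra.
  by apply: nbhs_left_gt; lra.
move=> h.
have : \forall B \near m^'-, (B < m)%R /\ forall y, K y -> H v y < B%:E.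
  by apply: filterS2 (nbhs_left_lt m) h => B Bm hB.
by move=> /filter_ex[B [Bm HB]]; exists B.
Qed.

Lemma simplex_ex : exists q, @simplex R n q.
Proof. by case: (proj1 (proj2 Fleg)) => q /ri_simplexW; exists q. Qed.

Lemma max_exists v : exists2 p, simplex p & forall q, H v q <= H v p.
Proof.
have [B HB] : exists B : R, forall y, simplex y -> H v y < B%:E.
  by apply: H_bnd => //; exact: simplex_compact.
pose M := ereal_sup (range (H v)).
have [q0 Sq0] := simplex_ex.
have MB : M <= B%:E.
  apply: ge_ereal_sup => _ [q _ <-].
  have [Sq|nSq] := pselect (simplex q); first exact/ltW/HB.
  by rewrite H_oo // leNye.
have Mq0 : H v q0 <= M by apply: ereal_sup_ubound; exists q0.
have Mfin : M \is a fin_num.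
  rewrite fin_numE; apply/andP; split.
    by apply: contraTN Mq0 => /eqP ->; rewrite H_fin // leeNy_eq.
  by apply: contraTN MB => /eqP ->; rewrite leye_eq.
have Hle q : H v q <= M by apply: ereal_sup_ubound; exists q.
case: (pselect (exists2 p, simplex p & M <= H v p)) => [[p Sp Mp]|np].
  by exists p => // q; apply: le_trans (Hle q) Mp.
have hlt x : simplex x -> H v x < (fine M)%:E.
  move=> Sx; rewrite fineK // lt_neqAle Hle andbT; apply/negP => /eqP hx.
  by apply: np; exists x; rewrite ?hx.
have [B' B'M HB'] : exists2 B : R, (B < fine M)%R & forall y, simplex y -> H v y < B%:E.
  by apply: H_gap => //; exact: simplex_compact.
have : M <= B'%:E.
  apply: ge_ereal_sup => _ [q _ <-].
  have [Sq|nSq] := pselect (simplex q); first exact/ltW/HB'.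
  by rewrite H_oo // leNye.
by rewrite -(fineK Mfin) lee_fin leNgt B'M.
Qed.

Lemma fconj_max v p : (forall q, H v q <= H v p) -> fconj F v = H v p.
Proof.
move=> hp; apply/eqP; rewrite eq_le; apply/andP; split.
  by apply: ge_ereal_sup => _ [q _ <-]; exact: hp.
by apply: ereal_sup_ubound; exists p.
Qed.

Lemma fconj_fin v : fconj F v \is a fin_num.
Proof.
have [p Sp hp] := max_exists v.
by rewrite (fconj_max hp) H_fin.
Qed.

Local Close Scope ereal_scope.

Lemma F_conv_fine u w t : simplex u -> simplex w -> 0 < t < 1 ->
  fine (F (t *: u + (1 - t) *: w)) <= t * fine (F u) + (1 - t) * fine (F w).
Proof.
move=> su sw ht.
have sc : simplex (t *: u + (1 - t) *: w).
  by apply: simplex_conv => //; case/andP: ht => ? ?; apply/andP; split; apply: ltW.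
have := Fconv u w ht.
move: (F_fin su) (F_fin sw) (F_fin sc).
case: (F u) => [a||]//; case: (F w) => [b||]//.
by case: (F (t *: u + (1 - t) *: w)) => [c||]// _ _ _ /=; rewrite -!EFinM -EFinD lee_fin.
Qed.

Lemma F_sconv_fine u w t : ri_simplex u -> ri_simplex w -> u != w -> 0 < t < 1 ->
  fine (F (t *: u + (1 - t) *: w)) < t * fine (F u) + (1 - t) * fine (F w).
Proof.
move=> su sw uw ht.
have sc : simplex (t *: u + (1 - t) *: w).
  apply: simplex_conv; [exact: ri_simplexW|exact: ri_simplexW|].
  by case/andP: ht => ? ?; apply/andP; split; apply: ltW.
have := (proj1 Fleg) u w t su sw uw ht.
move: (F_fin (ri_simplexW su)) (F_fin (ri_simplexW sw)) (F_fin sc).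
case: (F u) => [a||]//; case: (F w) => [b||]//.
by case: (F (t *: u + (1 - t) *: w)) => [c||]// _ _ _ /=; rewrite -!EFinM -EFinD lte_fin.
Qed.

Lemma subgrad u g z : ri_simplex u -> rel_gradient F u g -> simplex z ->
  dotv g (z - u) <= fine (F z) - fine (F u).
Proof.
move=> ru [tg hg] sz; have su := ri_simplexW ru.
set c := `|z - u|.
have key e : 0 < e -> dotv g (z - u) <= fine (F z) - fine (F u) + e * c.
  move=> e0; have [d d0 hd] := hg e e0.
  pose s := Num.min (1/2) (d / (c + 1)).
  have c0 : 0 <= c by rewrite /c normr_ge0.
  have s0 : 0 < s by rewrite lt_min; apply/andP; split; [lra|apply: divr_gt0 => //; lra].
  have s1 : s < 1 by rewrite gt_min; apply/orP; left; lra.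
  have sdc : s * c < d.
    have : s <= d / (c + 1) by rewrite ge_min lexx orbT.
    rewrite ler_pdivlMr ?ltr_pwDr // => h1.
    by rewrite (_ : s * c = s * (c + 1) - s); [lra|ring].
  have th : tangent (s *: (z - u)) by apply: tangentZ; apply: tangentB.
  have nh : `|s *: (z - u)| = s * c by rewrite normrZ gtr0_norm.
  have := hd _ th; rewrite nh => /(_ sdc).
  rewrite conv_eq dotvZr => hb.
  have hc := @F_conv_fine z u s sz su (ltac:(apply/andP; split => //)).
  move: hb; rewrite ler_norml => /andP[hb1 _].
  have : s * dotv g (z - u) <= s * (fine (F z) - fine (F u) + e * c) by lra.
  by rewrite ler_pM2l.
apply/ler_addgt0Pr => e e0; have c0 : 0 <= c by rewrite /c normr_ge0.
have ec0 : 0 < e / (c + 1) by apply: divr_gt0 => //; lra.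
have := key _ ec0.
move/le_trans; apply; rewrite lerD2l.
have : e / (c + 1) * (c + 1) = e by rewrite divfK //; apply: lt0r_neq0; lra.
have : 0 <= e / (c + 1) by apply: ltW.
move: (e / (c + 1)) => a a0 ha; nra.
Qed.

Lemma F_lower : exists fm : R, forall q, simplex q -> fm <= fine (F q).
Proof.
have [p0 Sp0 hp0] := max_exists 0.
exists (fine (F p0)) => q Sq.
by have := hp0 q; rewrite !H_fin // !dotv0l lee_fin; lra.
Qed.

Lemma max_ri v p : simplex p -> (forall q, (H v q <= H v p)%E) -> ri_simplex p.
Proof.
move=> Sp hp; apply: contrapT => nrp.
have [q0 rq0] := proj1 (proj2 Fleg).
have sq0 := ri_simplexW rq0.
pose t k : R := harmonic k.
have t0 k : 0 < t k := harmonic_gt0 k.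
have t1 k : t k <= 1 by rewrite /t /harmonic /= invf_le1 ?ler1n ?ltr0n.
pose u k := p + t k *: (q0 - p).
have uE k : u k = t k *: q0 + (1 - t k) *: p := conv_eq p q0 (t k).
have ru k : ri_simplex (u k).
  have su : simplex (u k).
    by rewrite uE; apply: simplex_conv => //; rewrite t1 ltW.
  split; last by case: su.
  move=> j; rewrite uE !mxE.
  have := proj1 rq0 j; have := proj1 Sp j; have := t0 k; have := t1 k; nra.
have [g hg] := choice (fun k => proj1 (proj2 (proj2 Fleg)) (u k) (ru k)).
have cvu : u @ \oo --> p.
  have : (fun k => p + t k *: (q0 - p)) @ \oo --> p + 0 *: (q0 - p).
    apply: cvgD; first exact: cvg_cst.
    exact: cvgZr_tmp cvg_harmonic.
  by rewrite scale0r addr0.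
have blow := proj2 (proj2 (proj2 Fleg)) u g p ru hg cvu nrp.
have [fm hfm] := F_lower.
pose C1 := \sum_j `|fine (F (@ev R n j))| + `|fm|.
pose c := dotv v (q0 - p).
pose Bd := 2 * \sum_j (C1 + (`|c| + C1) / q0 j 0).
have bnd k : `|g k| <= Bd.
  apply: (bound_aux (s := dotv (g k) (u k))) => //.
  - exact: (proj1 (hg k)).
  - by apply: addr_ge0 => //; apply: sumr_ge0.
  - move=> j; have := subgrad (ru k) (hg k) (@ev_simplex R n j).
    rewrite dotvBr dotv_ev => h1.
    have e1 : fine (F (@ev R n j)) <= \sum_i `|fine (F (@ev R n i))|.
      apply: le_trans (ler_norm _) _; rewrite (bigD1 j) //= lerDl.
      by apply: sumr_ge0.
    have e2 : fm <= fine (F (u k)) := hfm _ (ri_simplexW (ru k)).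
    have e3 : - fm <= `|fm| by rewrite -normrN ler_norm.
    rewrite /C1; lra.
  - have hsub := subgrad (ru k) (hg k) Sp.
    have hmax := hp (u k); rewrite !H_fin ?lee_fin // in hmax; last exact: ri_simplexW.
    have e1 : p - u k = - t k *: (q0 - p).
      by apply/matrixP => i j; rewrite /u !mxE; ring.
    have e2 : q0 - u k = (1 - t k) *: (q0 - p).
      by apply/matrixP => i j; rewrite /u !mxE; ring.
    have e3 : dotv v (u k) = dotv v p + t k * c.
      by rewrite /u dotvDr dotvZr.
    rewrite e1 dotvZr in hsub.
    rewrite -dotvBr e2 dotvZr.
    rewrite e3 mulNr in hmax hsub.
    have := t0 k; have := t1 k.
    move: hsub hmax; move: (dotv (g k) (q0 - p)) => dg hsub hmax.
    move=> tk1 tk0.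
    have hdg : t k * c <= t k * dg by lra.
    rewrite ler_pM2l // in hdg.
    have cc1 : - `|c| <= c by rewrite lerNl -normrN ler_norm.
    have cc2 : c <= `|c| by rewrite ler_norm.
    nra.
have /cvgeyPgt/(_ Bd) := blow.
by case/filter_ex => k; rewrite lte_fin ltNge bnd.
Qed.

Lemma max_unique v p1 p2 : simplex p1 -> simplex p2 ->
  (forall q, (H v q <= H v p1)%E) -> (forall q, (H v q <= H v p2)%E) -> p1 = p2.
Proof.
move=> S1 S2 h1 h2; apply: contrapT => /eqP ne.
have r1 := max_ri S1 h1; have r2 := max_ri S2 h2.
have ht : 0 < (1 / 2 : R) < 1 by apply/andP; split; lra.
have hs := F_sconv_fine r1 r2 ne ht.
have Sm : simplex ((1/2) *: p1 + (1 - 1/2) *: p2).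
  by apply: simplex_conv => //; apply/andP; split; lra.
have a := h1 ((1/2) *: p1 + (1 - 1/2) *: p2).
have b := h1 p2; have c := h2 p1.
rewrite !H_fin // !lee_fin dotvDr !dotvZr in a b c.
lra.
Qed.

Lemma normB_continuous p : continuous (fun q : 'cV[R]_n => `|q - p|).
Proof.
move=> x; apply/(@cvgrPdist_lt _ _ _ _ (nbhs_filter x)) => e e0.
apply/(@nbhs_normP _ ('cV[R]_n : normedModType R)); exists e => //= y /= hy.
apply: le_lt_trans hy; apply: le_trans (ler_dist_dist (x - p) (y - p)) _.
by rewrite opprB addrA subrK.
Qed.

Lemma argmax_cont v p (eps : R) : simplex p -> (forall q, (H v q <= H v p)%E) ->
  0 < eps -> exists2 d, 0 < d & forall h q, `|h| < d -> simplex q ->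
    (forall q', (H (v + h) q' <= H (v + h) q)%E) -> `|q - p| < eps.
Proof.
move=> Sp hp e0.
pose K := [set q | simplex q /\ eps <= `|q - p|].
have KS : K `<=` @simplex R n by move=> q [].
have cK : compact K.
  apply: (@cV_compact _ _ _ 1); last by move=> q [/simplex_norm].
  apply: closedI; first exact: simplex_closed.
  apply: (@preimage_closed _ R (fun q : 'cV[R]_n => `|q - p|) [set x : R | eps <= x] _ (@closed_ge R eps)).
  by move=> x _; apply: normB_continuous.
have hK x : K x -> (H v x < (fine (H v p))%:E)%E.
  move=> [Sx ex]; rewrite fineK; last by rewrite H_fin.
  rewrite lt_neqAle hp andbT; apply/negP => /eqP hx.
  have hx' : forall q, (H v q <= H v x)%E by move=> q; rewrite hx.
  have := max_unique Sx Sp hx' hp.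
  move=> xp; move: ex; rewrite xp subrr normr0 leNgt e0.
  by [].
have [B Bm HB] := H_gap cK KS hK.
exists ((fine (H v p) - B) / 2); first by apply: divr_gt0 => //; lra.
move=> h q hh Sq hq; rewrite ltNge; apply/negP => eq.
have := HB q (conj Sq eq); have := hq p.
rewrite !H_fin // !lee_fin !lte_fin !dotvDl => h1 h2.
move: (dotv_simplex_le h Sq) (dotv_simplex_le h Sp); rewrite !ler_norml.
move=> /andP[a1 a2] /andP[b1 b2].
rewrite H_fin // /= in Bm hh; lra.
Qed.

Lemma fconj_grad v p : simplex p -> (forall q, (H v q <= H v p)%E) ->
  is_gradient (fun w => fine (fconj F w)) v p.
Proof.
move=> Sp hp.
have : forall w, exists q, simplex q /\ forall q', (H w q' <= H w q)%E.
  by move=> w; have [q ? ?] := max_exists w; exists q.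
move=> /choice[pf hpf].
have Fc w : fine (fconj F w) = dotv w (pf w) - fine (F (pf w)).
  by rewrite (fconj_max (proj2 (hpf w))) H_fin //; case: (hpf w).
have Fcv : fine (fconj F v) = dotv v p - fine (F p).
  by rewrite (fconj_max hp) H_fin.
have Fge w q : simplex q -> dotv w q - fine (F q) <= fine (fconj F w).
  move=> Sq; rewrite Fc; have := proj2 (hpf w) q.
  by rewrite !H_fin ?lee_fin //; case: (hpf w).
apply: grad_of => e e0.
have n1 : 0 < n%:R + 1 :> R by rewrite ltr_pwDr.
have [d d0 hd] := argmax_cont Sp hp (divr_gt0 e0 n1).
exists d => // h hh.
have [Sq hq] := hpf (v + h).
have hq' := hd h (pf (v + h)) hh Sq hq.
have up := Fge v _ Sq.
have lo := Fge (v + h) _ Sp.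
rewrite Fcv in up; rewrite Fc in lo; rewrite Fcv Fc.
rewrite !dotvDl in lo *.
have key : `|dotv h (pf (v + h) - p)| <= e * `|h|.
  apply: le_trans (dotv_le _ _) _.
  apply: le_trans (_ : (n%:R * `|h|) * (e / (n%:R + 1)) <= _).
    apply: ler_pM => //; [by apply: sumr_ge0|exact: sum_abs_le|exact: ltW].
  rewrite mulrAC; apply: ler_wpM2r => //.
  have : e / (n%:R + 1) * (n%:R + 1) = e by rewrite divfK //; apply: lt0r_neq0.
  have : 0 <= e / (n%:R + 1) by apply: ltW; apply: divr_gt0.
  move: (e / (n%:R + 1)) => x x0 hx; lra.
move: key; rewrite dotvBr ler_norml => /andP[k1 k2].
rewrite (dotvC p h) ler_norml; apply/andP; split; lra.
Qed.

Section OmC.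
Variables (d : nat) (Y : 'M[R]_(d, n)).

Lemma OmegaC_le q : simplex q -> (OmegaC Y F (Y *m q) <= F q)%E.
Proof. by move=> Sq; apply: ereal_inf_lbound; exists q. Qed.

Lemma OmegaC_lb fm mu : (forall q, simplex q -> fm <= fine (F q)) ->
  (fm%:E <= OmegaC Y F mu)%E.
Proof.
move=> hfm; apply: le_ereal_inf_tmp => _ [q [Sq _] <-].
by rewrite -(fineK (F_fin Sq)) lee_fin; apply: hfm.
Qed.

Lemma OmegaC_fin q : simplex q -> OmegaC Y F (Y *m q) \is a fin_num.
Proof.
move=> Sq; have [fm hfm] := F_lower.
have h1 := OmegaC_le Sq; have h2 := OmegaC_lb (Y *m q) hfm.
have Ff := F_fin Sq.
rewrite fin_numE; apply/andP; split.
  by apply/negP => /eqP e; move: h2; rewrite e.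
by apply/negP => /eqP e; move: h1; rewrite e -(fineK Ff).
Qed.

Lemma fconjC phi : fconj (OmegaC Y F) phi = fconj F (Y^T *m phi).
Proof.
have cfin := fconj_fin (Y^T *m phi).
apply/eqP; rewrite eq_le; apply/andP; split.
  apply: ge_ereal_sup => _ [mu _ <-].
  have [[q [Sq Yq]]|nq] := pselect (exists q, simplex q /\ Y *m q = mu); last first.
    have -> : OmegaC Y F mu = +oo%E.
      rewrite /OmegaC.
      have -> : [set F q | q in [set q | simplex q /\ Y *m q = mu]] = set0.
        by apply/seteqP; split => // x [q hq _]; exfalso; apply: nq; exists q.
      exact: ereal_inf0.
    by rewrite addeNy leNye.
  have Ofin : OmegaC Y F mu \is a fin_num by rewrite -Yq; apply: OmegaC_fin.
  have lb : ((dotv phi mu - fine (fconj F (Y^T *m phi)))%:E <= OmegaC Y F mu)%E.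
    apply: le_ereal_inf_tmp => _ [q' [Sq' Yq'] <-].
    have : (H (Y^T *m phi) q' <= fconj F (Y^T *m phi))%E.
      by apply: ereal_sup_ubound; exists q'.
    rewrite H_fin // -(fineK cfin) lee_fin dotv_adj Yq' => hh.
    by rewrite -(fineK (F_fin Sq')) lee_fin; lra.
  move: lb; rewrite -(fineK Ofin) -[in X in _ -> (_ <= X)%E](fineK cfin) lee_fin.
  by rewrite -EFinB lee_fin => hh; lra.
apply: ge_ereal_sup => _ [q _ <-].
have [Sq|nSq] := pselect (simplex q); last by rewrite -/(H _ _) H_oo // leNye.
apply: (@le_trans _ _ ((dotv phi (Y *m q))%:E - OmegaC Y F (Y *m q))%E).
  by rewrite dotv_adj; apply: leeB => //; apply: OmegaC_le.
by apply: ereal_sup_ubound; exists (Y *m q).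
Qed.

Lemma FY_fin phi q : simplex q ->
  FYloss (OmegaC Y F) phi (Y *m q) =
  (fine (OmegaC Y F (Y *m q)) + fine (fconj F (Y^T *m phi)) - dotv phi (Y *m q))%:E.
Proof.
move=> Sq; rewrite /FYloss fconjC.
by rewrite efin3 //; [exact: OmegaC_fin|exact: fconj_fin].
Qed.

Lemma Sloss_fin gamma kappa s q : simplex q ->
  Sloss gamma kappa F s q =
  (dotv gamma q + kappa * (fine (F q) + fine (fconj F s) - dotv s q))%:E.
Proof.
move=> Sq; rewrite /Sloss /FYloss efin3; [|exact: F_fin|exact: fconj_fin].
by rewrite -EFinM -EFinD.
Qed.

Lemma S_split gamma kappa phi q : simplex q ->
  Sloss gamma kappa F (Y^T *m phi) q =
  (dotv gamma q + kappa * (fine (F q) - fine (OmegaC Y F (Y *m q))) +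
   kappa * (fine (OmegaC Y F (Y *m q)) + fine (fconj F (Y^T *m phi)) - dotv phi (Y *m q)))%:E.
Proof. by move=> Sq; rewrite Sloss_fin // dotv_adj; congr (_%:E); ring. Qed.

End OmC.

Lemma Sloss_H gamma kappa s q : 0 < kappa -> simplex q ->
  Sloss gamma kappa F s q =
  (kappa * (fine (fconj F s) - fine (H (s - kappa^-1 *: gamma) q)))%:E.
Proof.
move=> k0 Sq; rewrite Sloss_fin // H_fin //= dotvBl dotvZl.
congr (_%:E); field; exact: lt0r_neq0.
Qed.

Lemma Sloss_argmin gamma kappa s q : 0 < kappa ->
  (is_argmin (@simplex R n) (Sloss gamma kappa F s) q <->
   (simplex q /\ forall q', (H (s - kappa^-1 *: gamma) q' <= H (s - kappa^-1 *: gamma) q)%E)).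
Proof.
move=> k0; set v := s - kappa^-1 *: gamma; split.
  move=> [Sq hq]; split => // q'.
  have [Sq'|nSq'] := pselect (simplex q'); last by rewrite H_oo // leNye.
  have := hq q' Sq'; rewrite !Sloss_H // lee_fin ler_pM2l //.
  by rewrite !H_fin //= lee_fin; lra.
move=> [Sq hq]; split => // q' Sq'.
have := hq q'; rewrite !Sloss_H // lee_fin ler_pM2l // => h.
by move: h; rewrite !H_fin //= lee_fin => h; lra.
Qed.

Lemma claim2 gamma kappa s : 0 < kappa ->
  (forall v, fconj F v \is a fin_num) /\
  exists g, is_gradient (fun v => fine (fconj F v)) (s - kappa^-1 *: gamma) g /\
    (forall q, is_argmin (@simplex R n) (Sloss gamma kappa F s) q <-> q = g).
Proof.
move=> k0; split; first exact: fconj_fin.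
have [p Sp hp] := max_exists (s - kappa^-1 *: gamma).
exists p; split; first exact: fconj_grad.
move=> q; rewrite Sloss_argmin //; split.
  by move=> [Sq hq]; apply: max_unique Sq Sp hq hp.
by move=> ->.
Qed.

End L3.

Local Close Scope ereal_scope.
Unset Implicit Arguments.

Theorem proposition1 (R : realType) (X Xi W : Type) (N : nat)
  (x : 'I_N -> X) (xi : 'I_N -> Xi)
  (d m : X -> nat) (Y : forall z : X, 'M[R]_(d z, m z))
  (c : forall z : X, 'cV[R]_(d z) -> Xi -> R)
  (Omega : forall z : X, 'cV[R]_(m z) -> \bar R)
  (phi : W -> forall z : X, 'cV[R]_(d z)) (kappa : R) :
  (forall i : 'I_N, no_convex_comb (Y (x i))) ->
  (forall i : 'I_N,
     proper_fun (Omega (x i)) /\ lower_semicontinuous (Omega (x i)) /\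
     convex_fun (Omega (x i)) /\ dom_is_simplex (Omega (x i)) /\
     legendre_on_aff_simplex (Omega (x i))) ->
  0 < kappa ->
  let gamma (i : 'I_N) : 'cV[R]_(m (x i)) :=
    \col_j c (x i) (col j (Y (x i))) (xi i) in
  let S (i : 'I_N) (s q : 'cV[R]_(m (x i))) : \bar R :=
    Sloss (gamma i) kappa (Omega (x i)) s q in
  let SN (s Q : forall i : 'I_N, 'cV[R]_(m (x i))) : \bar R :=
    ((N%:R)^-1%:E * \sum_(i < N) S i (s i) (Q i))%E in
  let theta (w : W) (i : 'I_N) : 'cV[R]_(m (x i)) :=
    (Y (x i))^T *m phi w (x i) in
  let prod_simplex := [set Q : forall i : 'I_N, 'cV[R]_(m (x i)) |
                        forall i, simplex (Q i)] in
  forall wt : W,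
    (* the joint q-update splits into N independent problems *)
    (forall Q, is_argmin prod_simplex (SN (theta wt)) Q <->
       (forall i, is_argmin (@simplex R _) (S i (theta wt i)) (Q i))) /\
    (* each of them has a unique solution, given by grad Omega^* *)
    (forall i : 'I_N,
       (forall v, fconj (Omega (x i)) v \is a fin_num) /\
       exists g : 'cV[R]_(m (x i)),
         is_gradient (fun v => fine (fconj (Omega (x i)) v))
                     (theta wt i - kappa^-1 *: gamma i) g /\
         (forall q, is_argmin (@simplex R _) (S i (theta wt i)) q <-> q = g)) /\
    (forall Q, is_argmin prod_simplex (SN (theta wt)) Q ->
       (* mu_i = Y(x_i) q_i is the expectation of y under the distribution q_i *)
       (forall i : 'I_N, simplex (Q i) /\
          Y (x i) *m Q i = \sum_(j < m (x i)) Q i j 0 *: col j (Y (x i))) /\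
       (* the w-update is a Fenchel-Young loss minimization *)
       (forall w' : W,
          is_argmin [set: W] (fun w => SN (theta w) Q) w' <->
          is_argmin [set: W]
            (fun w => ((N%:R)^-1%:E *
               \sum_(i < N) FYloss (OmegaC (Y (x i)) (Omega (x i)))
                                   (phi w (x i)) (Y (x i) *m Q i))%E) w')).
Proof.
move=> hY hO k0 gamma S SN theta prod_simplex wt.
pose sv (i : 'I_N) (s q : 'cV[R]_(m (x i))) : R :=
  dotv (gamma i) q + kappa * (fine (Omega (x i) q) + fine (fconj (Omega (x i)) s) - dotv s q).
have SE i s q : simplex q -> S i s q = (sv i s q)%:E.
  by move=> Sq; case: (hO i) => Fp [Fl [_ [Fd Fg]]]; exact: Sloss_fin.
have SNE s Q : (forall i, simplex (Q i)) ->
    SN s Q = ((N%:R)^-1 * \sum_i sv i (s i) (Q i))%:E.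
  move=> hQ; rewrite /SN (eq_bigr (fun i => (sv i (s i) (Q i))%:E)).
    by rewrite sumEFin -EFinM.
  by move=> i _; apply: SE.
have exg : forall i, exists g : 'cV[R]_(m (x i)),
    (forall v, fconj (Omega (x i)) v \is a fin_num) /\
    is_gradient (fun v => fine (fconj (Omega (x i)) v))
                (theta wt i - kappa^-1 *: gamma i) g /\
    (forall q, is_argmin (@simplex R _) (S i (theta wt i)) q <-> q = g).
  move=> i; case: (hO i) => Fp [Fl [Fc [Fd Fg]]].
  have [fin [g [gg hg]]] := claim2 Fp Fl Fc Fd Fg (gamma i) (theta wt i) k0.
  by exists g.
pose P i := proj1_sig (cid (exg i)).
have hP i : (forall v, fconj (Omega (x i)) v \is a fin_num) /\
    is_gradient (fun v => fine (fconj (Omega (x i)) v))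
                (theta wt i - kappa^-1 *: gamma i) (P i) /\
    (forall q, is_argmin (@simplex R _) (S i (theta wt i)) q <-> q = P i).
  exact: (proj2_sig (cid (exg i))).
have PS i : is_argmin (@simplex R _) (S i (theta wt i)) (P i).
  by apply/(proj2 (proj2 (hP i))).
have claim1 : forall Q, is_argmin prod_simplex (SN (theta wt)) Q <->
       (forall i, is_argmin (@simplex R _) (S i (theta wt i)) (Q i)).
  move=> Q; split; last first.
    move=> hQ; split; first by move=> i; case: (hQ i).
    move=> Q' hQ'; rewrite !SNE //; last by move=> i; case: (hQ i).
    rewrite lee_fin; apply: ler_wpM2l; first by rewrite invr_ge0.
    apply: ler_sum => i _; have := (proj2 (hQ i)) (Q' i) (hQ' i).
    by rewrite !SE // ?lee_fin //; case: (hQ i).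
  move=> [hQ hmin] i; split; first exact: hQ.
  have PP : prod_simplex P by move=> j; case: (PS j).
  have hPs : forall j, simplex (P j) by move=> j; case: (PS j).
  have hle := hmin P PP; rewrite (SNE _ _ hQ) (SNE _ _ hPs) lee_fin in hle.
  have N0 : (0 < N)%N := leq_ltn_trans (leq0n i) (ltn_ord i).
  have Ninv : 0 < (N%:R : R)^-1 by rewrite invr_gt0 ltr0n.
  rewrite ler_pM2l // in hle.
  have ba j : sv j (theta wt j) (P j) <= sv j (theta wt j) (Q j).
    by have := (proj2 (PS j)) (Q j) (hQ j); rewrite !SE // ?lee_fin //; case: (PS j).
  have eq0 : \sum_j (sv j (theta wt j) (Q j) - sv j (theta wt j) (P j)) = 0.
    apply/eqP; rewrite eq_le; apply/andP; split.
      by rewrite sumrB subr_le0.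
    by apply: sumr_ge0 => j _; rewrite subr_ge0.
  have hge : forall j : 'I_N, true -> 0 <= sv j (theta wt j) (Q j) - sv j (theta wt j) (P j).
    by move=> j _; rewrite subr_ge0.
  have eqi : sv i (theta wt i) (Q i) - sv i (theta wt i) (P i) = 0.
    by apply: (psumr_eq0P hge eq0).
  move/eqP: eqi; rewrite subr_eq0 => /eqP eqi.
  move=> y Sy; rewrite (SE i _ _ (hQ i)) eqi -SE; last by case: (PS i).
  exact: (proj2 (PS i)).
split; first exact: claim1.
split.
  by move=> i; have [fin [gg hg]] := hP i; split => //; exists (P i).
move=> Q /claim1 hQ.
have Si i : simplex (Q i) by case: (hQ i).
split; first by move=> i; split; [exact: Si|exact: mul_col_sum].
move=> w'.
pose a i := dotv (gamma i) (Q i) + kappa * (fine (Omega (x i) (Q i)) -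
   fine (OmegaC (Y (x i)) (Omega (x i)) (Y (x i) *m Q i))).
pose u (w : W) i := fine (OmegaC (Y (x i)) (Omega (x i)) (Y (x i) *m Q i)) +
   fine (fconj (Omega (x i)) (theta w i)) - dotv (phi w (x i)) (Y (x i) *m Q i).
have TE w : SN (theta w) Q =
    ((N%:R)^-1 * \sum_i a i + kappa * ((N%:R)^-1 * \sum_i u w i))%:E.
  rewrite /SN (eq_bigr (fun i => (a i + kappa * u w i)%:E)).
    rewrite sumEFin -EFinM; congr (_%:E); rewrite big_split /= -mulr_sumr; ring.
  move=> i _; case: (hO i) => Fp [Fl [_ [Fd Fg]]].
  exact: (S_split Fp Fl Fd Fg _ _ _ _ (Si i)).
have FE w : ((N%:R)^-1%:E * \sum_(i < N) FYloss (OmegaC (Y (x i)) (Omega (x i)))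
      (phi w (x i)) (Y (x i) *m Q i))%E = ((N%:R)^-1 * \sum_i u w i)%:E.
  rewrite (eq_bigr (fun i => (u w i)%:E)); first by rewrite sumEFin -EFinM.
  move=> i _; case: (hO i) => Fp [Fl [_ [Fd Fg]]].
  exact: (FY_fin Fp Fl Fd Fg _ _ (Si i)).
rewrite /is_argmin; split => [[_ h]|[_ h]]; split => // y _; have := h y I.
  by rewrite /= !TE FE FE !lee_fin lerD2l (ler_pM2l k0).
by rewrite /= !TE FE FE !lee_fin lerD2l (ler_pM2l k0).
Qed.
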